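(* Let $f\in\mathbb R[x_1,\ldots,x_d]$ be a convenient non-degenerate weighted homogeneous polynomial and let $\delta_i$ be the exponent of the pure monomial $x_i^{\delta_i}$ of $f$. Let $B_f(T)=\frac{(\mathbb L-\mathbb 1)^d}{\mathbb 1-T}\sum_{\tau\in\Gamma_f^c}S_{\sigma(\tau)}(T)$. Then, in $\widehat{\mathcal M}[[T]]$, $$B_f(T)-\frac{T}{\mathbb 1-T}=-\sum_{m\ge1}\mathbb L^{-\sum_{i=1}^d\lfloor m/\delta_i\rfloor}T^m.$$
   Context: $\mathcal{AS}$-sets: semialgebraic $S\subset\mathbb P^n_{\mathbb R}$ such that for every real analytic arc $\gamma:(-1,1)\to\mathbb P^n_{\mathbb R}$ with $\gamma((-1,0))\subset S$ there is $\varepsilon>0$ with $\gamma((0,\varepsilon))\subset S$. $K_0(\mathcal{AS})$ is their Grothendieck ring (scissor relations, bijections with $\mathcal{AS}$ graph, cartesian product). For $n\ge1$, $K_0(\mathcal{AS}^n_{\mathrm{mon}})$ is the Grothendieck group of symbols $[\varphi_X:\mathbb R^*\circlearrowright X\to\mathbb R^*]$ ($X$ an $\mathcal{AS}$-set with $\mathbb R^*$-action and $\varphi_X$ both with $\mathcal{AS}$ graphs, $\varphi_X(\lambda x)=\lambda^n\varphi_X(x)$), modulo equivariant $\mathcal{AS}$-bijections over $\mathbb R^*$, scissor relations for invariant closed $\mathcal{AS}$-subsets, and independence of the choice of lifting of the action to $Y\times\mathbb R^m$ for symbols $\varphi_Y\circ\operatorname{pr}_Y$; product is fiber product over $\mathbb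 R^*$; $K_0(\mathcal{AS})$ acts by $[A]\cdot[\varphi_X]=[\varphi_X\circ\operatorname{pr}_X:A\times X\to\mathbb R^*]$ (trivial action on $A$). $K_0(\mathcal{AS}_{\mathrm{mon}})=\varinjlim_n K_0(\mathcal{AS}^n_{\mathrm{mon}})$ (for $n=km$, a level-$m$ action $\lambda\cdot x$ becomes $\lambda^k\cdot x$). $\mathbb 1=[\mathrm{id}:\mathbb R^*\to\mathbb R^*]$ with $\lambda\cdot r=\lambda r$, $\mathbb L=[\mathbb R]\cdot\mathbb 1$, $\mathcal M=K_0(\mathcal{AS}_{\mathrm{mon}})[\mathbb L^{-1}]$, and $\widehat{\mathcal M}$ is the completion of $\mathcal M$ with respect to the filtration $\mathcal F^m\mathcal M$ spanned by $[S]\mathbb L^{-i}$ with $i-\dim S\ge m$. For $f=\sum c_\nu x^\nu$: $\Gamma_f=\operatorname{Conv}(\bigcup_{c_\nu\neq0}(\nu+\mathbb R^d_{\ge0}))$ is the Newton polyhedron, $\Gamma_f^c$ its set of compact faces, $f_\tau=\sum_{\nu\in\tau}c_\nu x^\nu$, $m(k)=\inf\{k\cdot x:x\in\Gamma_f\}$, $\sigma(\tau)=\{k\in\mathbb R^d_{\ge0}:\{x\in\Gamma_f:k\cdot x=m(k)\}=\tau\}$, $S_{\sigma(\tau)}(T)=\sum_{k\in\sigma(\tau)\cap\mathbb N^d}\mathbb L^{-|k|}T^{m(k)}$, $|k|=\sum_ik_i$. $f$ is convenient if each $x_i^{\delta_i}$ ($\delta_i\ge1$) appears in $f$; non-degenerate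 if for every $\tau\in\Gamma_f^c$ the partials of $f_\tau$ have no common zero in $(\mathbb R^* )^d$; weighted homogeneous if $f(\lambda^{w_1}x_1,\ldots,\lambda^{w_d}x_d)=\lambda^wf(x)$ for some $w_i,w\in\mathbb N_{>0}$ and all $\lambda\in\mathbb R$. *)

(* Defs.v *)
From HB Require Import structures.
From mathcomp Require Import all_boot all_order all_algebra.
From mathcomp Require Import mpoly.
From mathcomp Require Import reals.
From Stdlib Require Import ClassicalDescription ClassicalEpsilon.
From Stdlib Require List.

Set Implicit Arguments.
Unset Strict Implicit.
Unset Printing Implicit Defensive.

Import Order.TTheory GRing.Theory Num.Theory.
Local Open Scope ring_scope.

(* Abstract model of the coefficient ring \hat{M}: a commutative ring  *)
(* A with a decreasing Z-indexed filtration F by additive subgroups,    *)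
(* multiplicative (F m * F n <= F (m+n)), 1 \in F 0, separated and     *)
(* complete.  (\hat{M} with the filtration F^m of the paper, completed, *)
(* is such a ring, with L^-1 \in F^1.)                                 *)
Definition complete_filtration (A : comUnitRingType) (F : int -> A -> Prop) :=
  [/\ (forall n, F n 0 /\ forall x y, F n x -> F n y -> F n (x - y)),
      (forall m n, (m <= n)%R -> forall x, F n x -> F m x),
      (forall m n x y, F m x -> F n y -> F (m + n)%R (x * y)),
      F 0%R 1 &
      (forall x, (forall n, F n x) -> x = 0) /\
      (forall u : nat -> A,
          (forall n, exists N, forall p q, (N <= p)%N -> (N <= q)%N -> F n (u p - u q)) ->
          exists l, forall n, exists N, forall p, (N <= p)%N -> F n (u p - l))].

Definition has_sum (A : comUnitRingType) (F : int -> A -> Prop)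
    (I : Type) (P : I -> Prop) (a : I -> A) (s : A) : Prop :=
  forall n : int, exists S0 : seq I,
    (forall i, List.In i S0 -> P i) /\
    forall S : seq I, List.NoDup S -> (forall i, List.In i S -> P i) ->
      List.incl S0 S -> F n (s - \sum_(i <- S) a i).

(* The value of such a sum (0 if the family is not summable). *)
Definition hsum (A : comUnitRingType) (F : int -> A -> Prop)
    (I : Type) (P : I -> Prop) (a : I -> A) : A :=
  match excluded_middle_informative (exists s, has_sum F P a s) with
  | left h => proj1_sig (constructive_indefinite_description _ h)
  | right _ => 0
  end.

Definition pseries (A : comUnitRingType) := nat -> A.
Definition ps_mul (A : comUnitRingType) (p q : pseries A) : pseries A :=
  fun n => \sum_(i < n.+1) p i * q (n - i)%N.
Definition ps_sub (A : comUnitRingType) (p q : pseries A) : pseries A :=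
  fun n => p n - q n.
Definition ps_scale (A : comUnitRingType) (c : A) (p : pseries A) : pseries A :=
  fun n => c * p n.
Definition ps_T (A : comUnitRingType) : pseries A := fun n => if n == 1%N then 1 else 0.
Definition ps_inv_1mT (A : comUnitRingType) : pseries A := fun _ => 1.

Section Newton.
Variables (R : realType) (d : nat).

Definition dotR (k x : 'I_d -> R) : R := \sum_(i < d) k i * x i.

Definition nat_vec (k : 'I_d -> nat) : 'I_d -> R := fun i => (k i)%:R.

(* Gamma_f = Conv( U_{c_nu <> 0} (nu + R_{>=0}^d) ) *)
Definition newton (f : {mpoly R[d]}) (x : 'I_d -> R) : Prop :=
  exists (n : nat) (lam : 'I_n -> R) (y : 'I_n -> 'I_d -> R),
    [/\ forall j, 0 <= lam j,
        \sum_(j < n) lam j = 1,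
        forall j, exists nu : 'X_{1..d}, f@_nu != 0 /\ forall i, (nu i)%:R <= y j i
      & x = fun i => \sum_(j < n) lam j * y j i].

Definition face_of (f : {mpoly R[d]}) (k : 'I_d -> R) : ('I_d -> R) -> Prop :=
  fun x => newton f x /\ forall y, newton f y -> dotR k x <= dotR k y.

Definition is_mk (f : {mpoly R[d]}) (k : 'I_d -> R) (r : R) : Prop :=
  (forall y, newton f y -> r <= dotR k y) /\
  (forall e, 0 < e -> exists y, newton f y /\ dotR k y < r + e).

Definition is_face (f : {mpoly R[d]}) (tau : ('I_d -> R) -> Prop) : Prop :=
  exists k, (forall i, 0 <= k i) /\ tau = face_of f k.

(* compact faces Gamma_f^c (faces of a polyhedron are closed, so
   compact = bounded) *)
Definition compact_face (f : {mpoly R[d]}) (tau : ('I_d -> R) -> Prop) : Prop :=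
  is_face f tau /\ exists M : R, forall x, tau x -> forall i, `|x i| <= M.

Definition sigma_cone (f : {mpoly R[d]}) (tau : ('I_d -> R) -> Prop)
   (k : 'I_d -> R) : Prop :=
  (forall i, 0 <= k i) /\ face_of f k = tau.

Definition f_face (f : {mpoly R[d]}) (tau : ('I_d -> R) -> Prop) : {mpoly R[d]} :=
  \sum_(nu <- msupp f)
     (if excluded_middle_informative (tau (fun i => (nu i)%:R))
      then f@_nu *: 'X_[nu] else 0).

Definition convenient (f : {mpoly R[d]}) : Prop :=
  forall i : 'I_d, exists delta : nat, (1 <= delta)%N /\ f@_(mnm1 i *+ delta)%MM != 0.

Definition non_degenerate (f : {mpoly R[d]}) : Prop :=
  forall tau, compact_face f tau ->
    ~ exists x : 'I_d -> R, (forall i, x i != 0) /\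
        forall i, (mderiv i (f_face f tau)).@[x] = 0.

Definition weighted_homogeneous (f : {mpoly R[d]}) : Prop :=
  exists (w : 'I_d -> nat) (ww : nat),
    (forall i, (0 < w i)%N) /\ (0 < ww)%N /\
    forall (lam : R) (x : 'I_d -> R),
      f.@[fun i => lam ^+ (w i) * x i] = lam ^+ ww * f.@[x].

End Newton.

Section Bf.
Variables (A : comUnitRingType) (F : int -> A -> Prop) (L : A).
Variables (R : realType) (d : nat) (f : {mpoly R[d]}).

Definition S_sigma (tau : ('I_d -> R) -> Prop) : pseries A :=
  fun j => hsum F (fun k : 'I_d -> nat =>
                     sigma_cone f tau (nat_vec R k) /\ is_mk f (nat_vec R k) j%:R)
                  (fun k => L^-1 ^+ (\sum_(i < d) k i)).

Definition sum_S : pseries A :=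
  fun j => hsum F (fun tau => compact_face f tau) (fun tau => S_sigma tau j).

Definition B_f : pseries A :=
  ps_scale ((L - 1) ^+ d) (ps_mul (ps_inv_1mT A) sum_S).

End Bf.

(* Main.v *)
Require Import Defs.
From HB Require Import structures.
From mathcomp Require Import all_boot all_order all_algebra.
From mathcomp Require Import mpoly.
From mathcomp Require Import reals.
From Stdlib Require Import ClassicalDescription ClassicalEpsilon FunctionalExtensionality PropExtensionality.
From Stdlib Require List.
From mathcomp Require Import ring lra zify.
Import Order.TTheory GRing.Theory Num.Theory.
Local Open Scope ring_scope.

Set Implicit Arguments.
Unset Strict Implicit.
Unset Printing Implicit Defensive.


Definition ceq (T : Type) (x y : T) : bool :=
  if excluded_middle_informative (x = y) then true else false.
Lemma ceqP (T : Type) : Equality.axiom (@ceq T).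
Proof. move=> x y; rewrite /ceq; case: excluded_middle_informative => h; by constructor. Qed.
Definition cT (T : Type) : Type := T.
HB.instance Definition _ (T : Type) := hasDecEq.Build (cT T) (@ceqP T).

Lemma InP (T : eqType) (x : T) (s : seq T) : List.In x s <-> x \in s.
Proof.
elim: s => [|y s IH] //=; rewrite inE; split.
- by case=> [->|/IH ->]; rewrite ?eqxx ?orbT.
- by case/orP=> [/eqP ->|/IH]; [left|right].
Qed.

Lemma NoDupP (T : eqType) (s : seq T) : List.NoDup s <-> uniq s.
Proof.
elim: s => [|y s IH] /=; first by split => // _; constructor.
split.
- move=> h; inversion h; subst; apply/andP; split; last by apply/IH.
  by apply/negP => /InP.
- case/andP=> h1 h2; constructor; last by apply/IH.
  by move/InP; apply/negP.
Qed.

Definition pb (T : Type) (P : T -> Prop) (x : T) : bool :=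
  if excluded_middle_informative (P x) then true else false.
Lemma pbP (T : Type) (P : T -> Prop) x : reflect (P x) (pb P x).
Proof. rewrite /pb; case: excluded_middle_informative => h; by constructor. Qed.

Section Filt.
Variables (A : comUnitRingType) (F : int -> A -> Prop).
Hypothesis hF : complete_filtration F.

Lemma F0 n : F n 0. Proof. by case: hF => [h _ _ _ _]; case: (h n). Qed.
Lemma FB n x y : F n x -> F n y -> F n (x - y).
Proof. by case: hF => [h _ _ _ _]; case: (h n) => _; apply. Qed.
Lemma FN n x : F n x -> F n (- x).
Proof. by move=> h; rewrite -sub0r; apply: FB => //; apply: F0. Qed.
Lemma FD n x y : F n x -> F n y -> F n (x + y).
Proof. by move=> hx hy; rewrite -[y]opprK; apply: FB => //; apply: FN. Qed.
Lemma Fmono m n x : (m <= n)%R -> F n x -> F m x.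
Proof. by case: hF => [_ h _ _ _] mn; apply: (h m n mn). Qed.
Lemma FM m n x y : F m x -> F n y -> F (m + n)%R (x * y).
Proof. by case: hF => [_ _ h _ _]; apply: h. Qed.
Lemma F1 : F 0 1. Proof. by case: hF. Qed.
Lemma Fsep x : (forall n, F n x) -> x = 0.
Proof. by case: hF => [_ _ _ _ [h _]]; apply: h. Qed.
Lemma Fsum n (I : Type) (r : seq I) (P : pred I) (a : I -> A) :
  (forall i, P i -> F n (a i)) -> F n (\sum_(i <- r | P i) a i).
Proof.
move=> h; elim: r => [|x r IH]; first by rewrite big_nil; apply: F0.
rewrite big_cons; case: ifP => // Px; exact: FD (h _ Px) IH.
Qed.
Lemma FM0 n x y : F 0 x -> F n y -> F n (x * y).
Proof. by move=> hx hy; have := FM hx hy; rewrite add0r. Qed.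
Lemma FprodB m (I : Type) (r : seq I) (a b : I -> A) :
  (0 <= m)%R -> (forall i, F 0 (a i)) -> (forall i, F 0 (b i)) ->
  (forall i, F m (a i - b i)) ->
  F m (\prod_(i <- r) a i - \prod_(i <- r) b i).
Proof.
move=> m0 ha hb hab; elim: r => [|x r IH]; first by rewrite !big_nil subrr; apply: F0.
rewrite !big_cons.
have -> : a x * \prod_(j <- r) a j - b x * \prod_(j <- r) b j =
   (a x - b x) * \prod_(j <- r) a j + b x * (\prod_(j <- r) a j - \prod_(j <- r) b j) by ring.
apply: FD; last by apply: FM0.
rewrite mulrC; apply: FM0 => //.
elim: r {IH} => [|y r IH]; rewrite ?big_nil ?big_cons; first exact: F1.
by have := FM (ha y) IH; rewrite addr0.
Qed.

Lemma has_sum_uniq (T : Type) (P : T -> Prop) (a : T -> A) s t :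
  has_sum F P a s -> has_sum F P a t -> s = t.
Proof.
move=> hs ht; apply/eqP; rewrite -subr_eq0; apply/eqP; apply: Fsep => n.
case: (hs n) => S0 [S0P hS0]; case: (ht n) => S1 [S1P hS1].
pose S : seq (cT T) := undup ((S0 : seq (cT T)) ++ (S1 : seq (cT T))).
have SP : forall i, List.In i S -> P i.
  move=> i /(@InP (cT T)); rewrite mem_undup mem_cat => /orP [] /(@InP (cT T)); [apply: S0P| apply: S1P].
have SN : List.NoDup S by apply/NoDupP; exact: undup_uniq.
have h1 := hS0 S SN SP.
have h2 := hS1 S SN SP.
have -> : s - t = (s - \sum_(i <- S) a i) - (t - \sum_(i <- S) a i) by ring.
have i1 : List.incl S0 S.
  move=> i /(@InP (cT T)) hi; apply/(@InP (cT T)); by rewrite mem_undup mem_cat hi.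
have i2 : List.incl S1 S.
  move=> i /(@InP (cT T)) hi; apply/(@InP (cT T)); by rewrite mem_undup mem_cat hi orbT.
exact: (FB (h1 i1) (h2 i2)).
Qed.

Lemma hsum_eq (T : Type) (P : T -> Prop) (a : T -> A) s :
  has_sum F P a s -> hsum F P a = s.
Proof.
move=> hs; rewrite /hsum; destruct (excluded_middle_informative (exists s0, has_sum F P a s0)) as [h|h]; last first.
  by exfalso; apply: h; exists s.
exact: has_sum_uniq (proj2_sig (constructive_indefinite_description _ h)) hs.
Qed.

Lemma has_sum_empty (T : Type) (P : T -> Prop) (a : T -> A) :
  (forall i, ~ P i) -> has_sum F P a 0.
Proof.
move=> h n; exists [::]; split => // S _ SP _.
case: S SP => [|x S] SP; first by rewrite big_nil subrr; apply: F0.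
by exfalso; apply: (h x); apply: SP; left.
Qed.

End Filt.


Definition Kt d := cT ('I_d -> nat).
Definition toK d M (g : {ffun 'I_d -> 'I_M.+1}) : Kt d := fun i => val (g i).
Definition boxlist d M : seq (Kt d) := map (@toK d M) (enum {ffun 'I_d -> 'I_M.+1}).
Arguments boxlist : clear implicits.
Definition wt d (k : 'I_d -> nat) : nat := (\sum_(i < d) k i)%N.

Lemma mem_box d M (k : Kt d) : (k \in boxlist d M) = [forall i, (k i <= M)%N].
Proof.
apply/mapP/forallP.
- by case=> g _ -> i; rewrite /toK -ltnS ltn_ord.
- move=> h; exists [ffun i => inord (k i)]; first by rewrite mem_enum.
  apply: functional_extensionality => i; rewrite /toK ffunE /= inordK // ltnS; exact: h.
Qed.

Lemma uniq_box d M : uniq (boxlist d M).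
Proof.
rewrite map_inj_uniq ?enum_uniq // => g1 g2 h; apply/ffunP => i; apply/val_inj.
exact: (congr1 (fun k : Kt d => k i) h).
Qed.

Lemma le_wt d (k : 'I_d -> nat) i : (k i <= wt k)%N.
Proof. by rewrite /wt (bigD1 i) //= leq_addr. Qed.

Lemma notbox_wt d M (k : Kt d) : k \notin boxlist d M -> (M < wt k)%N.
Proof.
rewrite mem_box negb_forall => /existsP [i]; rewrite -ltnNge => h.
exact: leq_trans h (le_wt k i).
Qed.

Lemma box_split (R : nmodType) d p (s : seq (Kt d)) (h : Kt d -> R) :
  uniq s -> {subset s <= boxlist d p} ->
  \sum_(k <- boxlist d p) h k = \sum_(k <- s) h k + \sum_(k <- boxlist d p | k \notin s) h k.
Proof.
move=> us ss; rewrite (bigID (mem s)) /=; congr (_ + _).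
rewrite -big_filter; apply: perm_big; apply: uniq_perm.
- by rewrite filter_uniq // uniq_box.
- done.
by move=> x; rewrite mem_filter; case: (boolP (x \in s)) => //= /ss ->.
Qed.

Section KSum.
Variables (A : comUnitRingType) (F : int -> A -> Prop).
Hypothesis hF : complete_filtration F.
Variables (l : A) (d : nat).
Hypothesis hl : F 1 l.

Lemma Fl n : F n%:Z (l ^+ n).
Proof.
elim: n => [|n IH]; first by rewrite expr0; apply: (F1 hF).
by rewrite exprS; have := FM hF hl IH; rewrite -PoszD.
Qed.

Definition aK (k : 'I_d -> nat) : A := l ^+ wt k.
Definition tP (P : ('I_d -> nat) -> Prop) (k : 'I_d -> nat) : A :=
  if pb P k then aK k else 0.
Definition BS P M : A := \sum_(k <- boxlist d M) tP P k.

Lemma FtP P k : F (wt k)%:Z (tP P k).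
Proof. rewrite /tP; case: pb; [exact: Fl | exact: (F0 hF)]. Qed.

Lemma BS_diff P M p : (M <= p)%N -> F (M.+1)%:Z (BS P p - BS P M).
Proof.
move=> Mp; rewrite /BS (@box_split _ d p (boxlist d M)); last 2 first.
- exact: uniq_box.
- by move=> k; rewrite !mem_box => /forallP h; apply/forallP => i; exact: leq_trans (h i) Mp.
rewrite addrAC subrr add0r; apply: (Fsum hF) => // k kn.
apply: (Fmono hF) (FtP P k) => //; rewrite lez_nat; exact: notbox_wt.
Qed.

Lemma hsA P : has_sum F P aK (hsum F P aK) /\
  forall n M : nat, (n <= M)%N -> F n%:Z (hsum F P aK - BS P M).
Proof.
case: hF => [_ _ _ _ [_ hc]].
have [L0 hL0] : exists L0, forall n, exists N, forall p, (N <= p)%N -> F n (BS P p - L0).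
  apply: hc => n; exists (absz n) => p q hp hq.
  have -> : BS P p - BS P q = (BS P p - BS P (absz n)) - (BS P q - BS P (absz n)) by ring.
  have hn : (n <= (absz n).+1%:Z)%R by rewrite (le_trans (lez_abs n)) // lez_nat.
  apply: (FB hF) => //; apply: (Fmono hF) hn _. exact: (BS_diff P hp). exact: (BS_diff P hq).
have approx : forall n M : nat, (n <= M)%N -> F n%:Z (L0 - BS P M).
  move=> n M nM; case: (hL0 n) => N hN.
  have -> : L0 - BS P M = (BS P (maxn N M) - BS P M) - (BS P (maxn N M) - L0) by ring.
  apply: (FB hF) => //; last by apply: hN; rewrite leq_maxl.
  apply: (Fmono hF) (BS_diff P (leq_maxr N M)) => //; rewrite lez_nat; exact: leqW.
have hs : has_sum F P aK L0.
  move=> n; pose N := absz n.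
  have hn : (n <= N%:Z)%R by exact: lez_abs.
  exists (filter (pb P) (boxlist d N)); split.
    by move=> i /(@InP (Kt d)); rewrite mem_filter => /andP [/pbP].
  move=> S /(@NoDupP (Kt d)) uS SP iS.
  pose p := (N + \sum_(k <- (S : seq (Kt d))) wt k)%N.
  have sub : {subset (S : seq (Kt d)) <= boxlist d p}.
    move=> k kS; rewrite mem_box; apply/forallP => i.
    apply: leq_trans (le_wt k i) _; rewrite /p (bigD1_seq k) //=.
    by rewrite addnCA leq_addr.
  have -> : L0 - \sum_(i <- S) aK i = (L0 - BS P p) + (BS P p - \sum_(i <- S) aK i) by ring.
  apply: (FD hF) => //; first by apply: (Fmono hF) hn _; apply: approx; rewrite leq_addr.
  rewrite /BS (box_split _ uS sub).
  have -> : \sum_(k <- (S : seq (Kt d))) tP P k = \sum_(i <- (S : seq (Kt d))) aK i.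
    rewrite big_seq_cond [RHS]big_seq_cond; apply: eq_bigr => k /andP [kS _].
    rewrite /tP; case: pbP => // nP; exfalso; apply: nP; apply: SP; exact/(@InP (Kt d)).
  rewrite addrAC subrr add0r; apply: (Fsum hF) => // k kS.
  rewrite /tP; case: (boolP (pb P k)) => Pk; last exact: (F0 hF).
  case: (boolP (k \in boxlist d N)) => kN.
    by exfalso; move/negP: kS; apply; apply/(@InP (Kt d)); apply: iS; apply/(@InP (Kt d)); rewrite mem_filter Pk.
  apply: (Fmono hF) (Fl _) => //; apply: le_trans hn _; rewrite lez_nat; apply: ltnW; exact: notbox_wt.
by rewrite (hsum_eq hF hs); split.
Qed.


Lemma outer_sum (T : Type) (g : ('I_d -> nat) -> T) (C : T -> Prop)
  (Mj : ('I_d -> nat) -> Prop) (Ts : seq (cT T)) :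
  uniq Ts -> (forall t, t \in Ts -> C t) -> (forall k, C (g k) -> Mj k -> g k \in Ts) ->
  hsum F C (fun t => hsum F (fun k => g k = t /\ Mj k) aK) =
  hsum F (fun k => C (g k) /\ Mj k) aK.
Proof.
move=> uT TC gT.
set b := fun t => hsum F (fun k => g k = t /\ Mj k) aK.
set W := hsum F (fun k => C (g k) /\ Mj k) aK.
have bz : forall t, C t -> t \notin Ts -> b t = 0.
  move=> t Ct tT; apply: (hsum_eq hF); apply: (has_sum_empty hF) => k [gk Mk].
  by move/negP: tT; apply; rewrite -gk; apply: gT => //; rewrite gk.
have fin : forall M, \sum_(t <- Ts) BS (fun k => g k = t /\ Mj k) M =
                     BS (fun k => C (g k) /\ Mj k) M.
  move=> M; rewrite /BS exchange_big /=; apply: eq_bigr => k _.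
  rewrite [X in _ = X]/tP; case: pbP => [[Cg Mk]|nC].
    rewrite (bigD1_seq (g k : cT T)) //=; last exact: gT.
    rewrite /tP; case: pbP => [_|[]]; last by split.
    rewrite big1 ?addr0 // => t tne; case: pbP => // [[gt _]].
    by move/negP: tne; rewrite gt eqxx.
  rewrite big_seq big1 // => t tT; rewrite /tP; case: pbP => // [[gt Mk]].
  by exfalso; apply: nC; split => //; rewrite gt; apply: TC.
have hs : has_sum F C b W.
  move=> n; pose N := absz n.
  have hn : (n <= N%:Z)%R by exact: lez_abs.
  exists Ts; split; first by move=> t /(@InP (cT T)); apply: TC.
  move=> S /(@NoDupP (cT T)) uS SP iS.
  have -> : \sum_(i <- S) b i = \sum_(t <- Ts) b t.
    rewrite (bigID (mem Ts)) /= [X in _ + X]big1_seq ?addr0; last first.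
      move=> t /andP [tT tS]; apply: bz => //; apply: SP; exact/(@InP (cT T)).
    rewrite -big_filter; apply: perm_big; apply: uniq_perm.
    - by rewrite filter_uniq.
    - done.
    move=> x; rewrite mem_filter; case: (boolP (x \in Ts)) => //= xT.
    by apply/(@InP (cT T)); apply: iS; apply/(@InP (cT T)).
  have -> : W - \sum_(t <- Ts) b t = (W - BS (fun k => C (g k) /\ Mj k) N) -
     \sum_(t <- Ts) (b t - BS (fun k => g k = t /\ Mj k) N).
    by rewrite sumrB fin; ring.
  apply: (Fmono hF) hn _; apply: (FB hF).
    by case: (hsA (fun k => C (g k) /\ Mj k)) => _; apply.
  apply: (Fsum hF) => t _; by case: (hsA (fun k => g k = t /\ Mj k)) => _; apply.
exact: (hsum_eq hF hs).
Qed.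

End KSum.
Arguments aK {A} l {d} k.
Arguments tP {A} l {d} P k.
Arguments BS {A} l {d} P M.


Section Final.
Variables (A : comUnitRingType) (F : int -> A -> Prop).
Hypothesis hF : complete_filtration F.
Variables (l : A) (d : nat).
Hypothesis hl : F 1 l.
Variable (delta : 'I_d -> nat).
Hypothesis hdel : forall i, (0 < delta i)%N.

Definition Pj (j : nat) (k : 'I_d -> nat) : Prop :=
  (forall i, (1 <= k i)%N) /\ (forall i, (j <= k i * delta i)%N) /\ (exists i, k i * delta i = j)%N.

Lemma point n k : \sum_(j < n.+1) tP l (Pj j) k =
  (if [forall i, 0 < k i]%N then aK l k else 0) -
  (if [forall i, n %/ delta i < k i]%N then aK l k else 0).
Proof.
case: (boolP [forall i, 0 < k i]%N) => [/forallP k1|nk1]; last first.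
  rewrite ifN; last first.
    apply: contra nk1 => /forallP h; apply/forallP => i; exact: leq_ltn_trans (h i).
  rewrite subrr big1 // => j _; rewrite /tP; case: pbP => // [[h _]].
  by move/negP: nk1; case; apply/forallP.
case: (boolP [forall i, n %/ delta i < k i]%N) => [/forallP kq | nkq].
  rewrite subrr big1 // => j _; rewrite /tP; case: pbP => // [[_ [_ [i hi]]]].
  have := kq i; rewrite ltn_divLR ?hdel // hi => h.
  by have := ltn_ord j; rewrite ltnS leqNgt h.
rewrite subr0; move: nkq; rewrite negb_forall => /existsP [i0]; rewrite -leqNgt leq_divRL ?hdel // => hi0.
case: (@arg_minnP _ i0 predT (fun i => k i * delta i)%N isT) => i1 _ hmin.
have mlt : (k i1 * delta i1 < n.+1)%N by rewrite ltnS; exact: leq_trans (hmin i0 isT) hi0.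
rewrite (bigD1 (Ordinal mlt)) //= {1}/tP; case: pbP => [_|[]]; last first.
  by split => //; split; [move=> i; exact: hmin | exists i1].
rewrite big1 ?addr0 // => j jne; rewrite /tP; case: pbP => // [[_ [hj [i2 hi2]]]].
move/negP: jne; case; apply/eqP/val_inj => /=; apply/eqP; rewrite eqn_leq hj /= -hi2.
exact: hmin.
Qed.

Lemma box_prod N (Rb : 'I_d -> nat -> bool) :
  \sum_(k <- boxlist d N) (if [forall i, Rb i (k i)] then aK l k else 0) =
  \prod_(i < d) \sum_(j < N.+1) (if Rb i j then l ^+ j else 0).
Proof.
rewrite bigA_distr_bigA /= /boxlist big_map big_enum /=; apply: eq_bigr => g _.
rewrite /toK /aK /wt; case: (boolP [forall i, _]) => [/forallP h|].
  rewrite -prodrXr; apply: eq_bigr => i _; by rewrite h.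
rewrite negb_forall => /existsP [i hi]; rewrite (bigD1 i) //= ifN // mul0r //.
Qed.

Lemma geo a N : (1 - l) * \sum_(j < N) (if (a <= j)%N then l ^+ j else 0) =
   l ^+ a - l ^+ (maxn a N).
Proof.
elim: N => [|N IH]; first by rewrite big_ord0 mulr0 maxn0 subrr.
rewrite big_ord_recr /= mulrDr IH; case: (leqP a N) => aN.
  rewrite (maxn_idPr (leqW aN)) exprS; ring.
rewrite (maxn_idPl aN); ring.
Qed.

Lemma F0l : F 0 l. Proof. by apply: (Fmono hF) hl. Qed.
Lemma F0_1l : F 0 (1 - l). Proof. apply: (FB hF) (F1 hF) F0l. Qed.
Lemma F0_exp x n : F 0 x -> F 0 (x ^+ n).
Proof.
move=> hx; elim: n => [|n IH]; first by rewrite expr0; apply: (F1 hF).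
by rewrite exprS; apply: (FM0 hF).
Qed.

Lemma final_alg n : (1 - l) ^+ d * \sum_(j < n.+1) hsum F (Pj j) (aK l) =
   l ^+ d - l ^+ (d + \sum_(i < d) n %/ delta i)%N.
Proof.
apply/eqP; rewrite -subr_eq0; apply/eqP; apply: (Fsep hF) => m.
pose N := (absz m + n)%N.
have hm : (m <= N%:Z)%R by rewrite (le_trans (lez_abs m)) // lez_nat leq_addr.
apply: (Fmono hF) hm _.
pose X := \sum_(j < n.+1) hsum F (Pj j) (aK l).
pose Y := \sum_(k <- boxlist d N) ((if [forall i, 0 < k i]%N then aK l k else 0) -
  (if [forall i, n %/ delta i < k i]%N then aK l k else 0)).
have XY : X - Y = \sum_(j < n.+1) (hsum F (Pj j) (aK l) - BS l (Pj j) N).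
  rewrite sumrB /X /Y; congr (_ - _); rewrite /BS exchange_big /=.
  by apply: eq_bigr => k _; rewrite point.
have -> : (1 - l) ^+ d * X - (l ^+ d - l ^+ (d + \sum_(i < d) n %/ delta i)) =
   (1 - l) ^+ d * (X - Y) + ((1 - l) ^+ d * Y - (l ^+ d - l ^+ (d + \sum_(i < d) n %/ delta i))) by ring.
apply: (FD hF).
  apply: (FM0 hF); first exact: F0_exp F0_1l.
  rewrite XY; apply: (Fsum hF) => j _.
  by case: (hsA hF hl (Pj j)) => _; apply.
rewrite /Y sumrB (box_prod N (fun i j => 0 < j)%N) (box_prod N (fun i j => n %/ delta i < j)%N).
have e1 : forall a, (a <= N.+1)%N -> (1 - l) * \sum_(j < N.+1) (if (a <= j)%N then l ^+ j else 0) =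
   l ^+ a - l ^+ N.+1.
  by move=> a aN; rewrite geo (maxn_idPr aN).
have pr : forall G : 'I_d -> A, (1 - l) ^+ d * \prod_(i < d) G i = \prod_(i < d) ((1 - l) * G i).
  by move=> G; rewrite big_split /= prodr_const card_ord.
rewrite mulrBr !pr.
rewrite (eq_bigr (fun i => l ^+ 1 - l ^+ N.+1)); last by move=> i _; exact: (e1 1%N).
rewrite [X in _ - X - _](eq_bigr (fun i => l ^+ (n %/ delta i).+1 - l ^+ N.+1)); last first.
  move=> i _; have hq : ((n %/ delta i).+1 <= N.+1)%N.
    rewrite ltnS /N; exact: leq_trans (leq_div _ _) (leq_addl _ _).
  exact: (e1 _ hq).
have -> : l ^+ d = \prod_(i < d) l ^+ 1 by rewrite prodr_const card_ord expr1.
have -> : l ^+ (d + \sum_(i < d) n %/ delta i) = \prod_(i < d) l ^+ (n %/ delta i).+1.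
  rewrite prodrXr; congr (_ ^+ _).
  rewrite [RHS](eq_bigr (fun i => (n %/ delta i) + 1)%N); last by move=> i _; rewrite addn1.
  by rewrite big_split /= addnC; congr (_ + _); rewrite sum_nat_const card_ord muln1.
have -> : forall a b c e : A, a - b - (c - e) = (a - c) - (b - e) by move=> *; ring.
have hN : (0 <= (N.+1)%:Z)%R by [].
apply: (Fmono hF) (_ : (N%:Z <= N.+1%:Z)%R) _; first by rewrite lez_nat.
apply: (FB hF); apply: (FprodB hF) => // i.
- apply: (FB hF); [exact: F0_exp F0l | exact: F0_exp F0l].
- exact: F0_exp F0l.
- by rewrite addrAC subrr add0r; apply: (FN hF); apply: Fl.
- apply: (FB hF); [exact: F0_exp F0l | exact: F0_exp F0l].
- exact: F0_exp F0l.
- by rewrite addrAC subrr add0r; apply: (FN hF); apply: Fl.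
Qed.

End Final.


Section Geo.
Variables (R : realType) (d : nat) (f : {mpoly R[d]}) (delta : 'I_d -> nat).
Hypothesis hdpos : forall i, (0 < delta i)%N.
Hypothesis hdel : forall i, f@_(mnm1 i *+ delta i)%MM != 0.
Hypothesis hSI : forall nu : 'X_{1..d}, f@_nu != 0 ->
  \sum_(i < d) (nu i)%:R / (delta i)%:R = 1 :> R.

Let dl i : R := (delta i)%:R.
Lemma dl_gt0 i : 0 < dl i. Proof. by rewrite /dl ltr0n. Qed.

Definition pt (i : 'I_d) (t : R) : 'I_d -> R :=
  fun i' => if i' == i then dl i + t else 0.

Lemma newton_ge0 y : newton f y -> forall i, 0 <= y i.
Proof.
case=> n [lam [yy [hl _ hy ->]]] i; apply: sumr_ge0 => j _.
apply: mulr_ge0 => //; case: (hy j) => nu [_ h]; exact: le_trans (h i).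
Qed.

Lemma newton_pt i t : 0 <= t -> newton f (pt i t).
Proof.
move=> t0; exists 1%N, (fun _ => 1), (fun _ => pt i t); split => //.
- by rewrite big_ord1.
- move=> _; exists (mnm1 i *+ delta i)%MM; split => // i'.
  rewrite mulmnE mnm1E /pt eq_sym; case: (i' == i) => /=; last by rewrite mul0n.
  by rewrite mul1n lerDl.
- by apply: functional_extensionality => i'; rewrite big_ord1 mul1r.
Qed.

Lemma dot_pt (k : 'I_d -> R) i t : dotR k (pt i t) = k i * (dl i + t).
Proof.
rewrite /dotR (bigD1 i) //= /pt eqxx big1 ?addr0 // => j /negbTE ->; exact: mulr0.
Qed.

Lemma nu_sum nu c : f@_nu != 0 -> \sum_(i < d) (c / dl i) * (nu i)%:R = c.
Proof.
move=> h; have e := hSI h.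
transitivity (c * \sum_(i < d) (nu i)%:R / (delta i)%:R); last by rewrite e mulr1.
rewrite mulr_sumr; apply: eq_bigr => i _.
by rewrite /dl mulrAC -mulrA.
Qed.

Lemma LBnu (k : 'I_d -> R) r nu : (forall i, 0 <= k i) -> (forall i, r <= k i * dl i) ->
  f@_nu != 0 -> r <= dotR k (fun i => (nu i)%:R).
Proof.
move=> k0 kr h; rewrite -subr_ge0 -(nu_sum r h) /dotR -sumrB.
apply: sumr_ge0 => i _; rewrite -mulrBl; apply: mulr_ge0 => //.
by rewrite subr_ge0 ler_pdivrMr ?dl_gt0.
Qed.

Lemma dot_exchange n (lam : 'I_n -> R) (yy : 'I_n -> 'I_d -> R) (k : 'I_d -> R) :
  dotR k (fun i => \sum_(j < n) lam j * yy j i) = \sum_(j < n) lam j * dotR k (yy j).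
Proof.
rewrite /dotR; under eq_bigr do rewrite mulr_sumr.
rewrite exchange_big /=; apply: eq_bigr => j _; rewrite mulr_sumr.
by apply: eq_bigr => i _; rewrite mulrCA.
Qed.

Lemma dot_mono (k x y : 'I_d -> R) : (forall i, 0 <= k i) -> (forall i, x i <= y i) -> dotR k x <= dotR k y.
Proof. by move=> k0 xy; apply: ler_sum => i _; apply: ler_wpM2l. Qed.

Lemma LB (k : 'I_d -> R) r y : (forall i, 0 <= k i) -> (forall i, r <= k i * dl i) ->
  newton f y -> r <= dotR k y.
Proof.
move=> k0 kr [n [lam [yy [hl hs hy ->]]]]; rewrite dot_exchange.
have -> : r = \sum_(j < n) lam j * r by rewrite -mulr_suml hs mul1r.
apply: ler_sum => j _; apply: ler_wpM2l => //.
case: (hy j) => nu [hnu hle]; apply: le_trans (LBnu k0 kr hnu) _.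
exact: dot_mono.
Qed.

Lemma is_mk_of (k : 'I_d -> R) r i0 : (forall i, 0 <= k i) -> (forall i, r <= k i * dl i) ->
  k i0 * dl i0 = r -> is_mk f k r.
Proof.
move=> k0 kr e; split; first by move=> y; apply: LB.
move=> e1 he; exists (pt i0 0); split; first exact: newton_pt.
by rewrite dot_pt addr0 e ltrDl.
Qed.

Lemma is_mk_uniq (k : 'I_d -> R) r r' : is_mk f k r -> is_mk f k r' -> r = r'.
Proof.
have h : forall r r', is_mk f k r -> is_mk f k r' -> r <= r'.
  move=> a b [ha _] [_ hb]; rewrite leNgt; apply/negP => ba.
  case: (hb (a - b)); first by rewrite subr_gt0.
  move=> y [ny hy]; have := ha y ny; lra.
by move=> h1 h2; apply/eqP; rewrite eq_le !(h _ _ h1 h2) ?(h _ _ h2 h1).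
Qed.

Lemma nat_vec_ge0 (k : 'I_d -> nat) i : 0 <= nat_vec R k i.
Proof. by rewrite /nat_vec. Qed.

Lemma is_mk_iff (k : 'I_d -> nat) (j : nat) (i0 : 'I_d) :
  is_mk f (nat_vec R k) j%:R <->
  (forall i, (j <= k i * delta i)%N) /\ (exists i, k i * delta i = j)%N.
Proof.
split; last first.
  case=> hj [i1 e]; apply: (@is_mk_of _ _ i1).
  - by move=> i; rewrite /nat_vec.
  - by move=> i; rewrite /nat_vec /dl -natrM ler_nat.
  - by rewrite /nat_vec /dl -natrM e.
move=> h.
case: (@arg_minnP _ i0 predT (fun i => k i * delta i)%N isT) => i1 _ hmin.
have h2 : is_mk f (nat_vec R k) (k i1 * delta i1)%N%:R.
  apply: (@is_mk_of _ _ i1).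
  - by move=> i; rewrite /nat_vec.
  - by move=> i; rewrite /nat_vec /dl -natrM ler_nat; apply: hmin.
  - by rewrite /nat_vec /dl -natrM.
have /eqP := is_mk_uniq h h2; rewrite eqr_nat => /eqP ->; split; last by exists i1.
by move=> i; apply: hmin.
Qed.

Lemma face_dot (k : 'I_d -> R) r i0 x : (forall i, 0 <= k i) -> (forall i, r <= k i * dl i) ->
  k i0 * dl i0 = r -> face_of f k x -> dotR k x = r.
Proof.
move=> k0 kr e [nx hx]; apply/eqP; rewrite eq_le (LB k0 kr nx) andbT.
by have := hx _ (newton_pt i0 (lexx 0)); rewrite dot_pt addr0 e.
Qed.


Lemma compact_iff (k : 'I_d -> nat) (i0 : 'I_d) :
  compact_face f (face_of f (nat_vec R k)) <-> (forall i, (1 <= k i)%N).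
Proof.
split.
  case=> _ [M hM] i; rewrite lt0n; apply/negP => /eqP ki0.
  have t0 : 0 <= `|M| + 1 by rewrite addr_ge0.
  have fx : face_of f (nat_vec R k) (pt i (`|M| + 1)).
    split; first exact: newton_pt.
    move=> y ny; rewrite dot_pt /nat_vec ki0 mul0r.
    apply: sumr_ge0 => i' _; apply: mulr_ge0 => //; exact: newton_ge0.
  have h := hM _ fx i; rewrite /pt eqxx in h.
  have h0 := dl_gt0 i; have h1 := ler_norm M.
  have hn : 0 <= dl i + (`|M| + 1) by rewrite addr_ge0 // ltW.
  rewrite ger0_norm // in h; clear -h h0 h1; lra.
move=> k1; split.
  exists (nat_vec R k); split => //; by move=> i; rewrite /nat_vec.
exists (dotR (nat_vec R k) (pt i0 0)) => x [nx hx] i.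
have x0 := newton_ge0 nx.
rewrite ger0_norm //; apply: le_trans (hx _ (newton_pt i0 (lexx 0))).
apply: (@le_trans _ _ (nat_vec R k i * x i)).
  by rewrite ler_peMl // /nat_vec ler1n.
rewrite /dotR (bigD1 i) //= lerDl; apply: sumr_ge0 => i' _.
by apply: mulr_ge0 => //; rewrite /nat_vec.
Qed.

Lemma face_sub (k k' : 'I_d -> R) r r' i0 i0' :
  (forall i, 0 < k i) -> (forall i, 0 < k' i) ->
  (forall i, r <= k i * dl i) -> k i0 * dl i0 = r ->
  (forall i, r' <= k' i * dl i) -> k' i0' * dl i0' = r' ->
  (forall i, k i * dl i = r -> k' i * dl i = r') ->
  forall x, face_of f k x -> face_of f k' x.
Proof.
move=> kp kp' kr e kr' e' hkk x fx.
have k0 : forall i, 0 <= k i by move=> i; apply: ltW.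
have k0' : forall i, 0 <= k' i by move=> i; apply: ltW.
have dx := face_dot k0 kr e fx.
case: fx => nx hx; split => // y ny.
apply: le_trans (LB k0' kr' ny).
case: nx dx => n [lam [yy [hl hs hy ex]]]; rewrite ex !dot_exchange => dx.
have D0 : forall j, 0 <= dotR k (yy j) - r.
  move=> j; case: (hy j) => nu [hnu hle]; rewrite subr_ge0.
  exact: le_trans (LBnu k0 kr hnu) (dot_mono k0 hle).
have sum0 : \sum_(j < n) lam j * (dotR k (yy j) - r) = 0.
  under eq_bigr do rewrite mulrBr.
  by rewrite sumrB dx -mulr_suml hs mul1r subrr.
have DZ : forall j, lam j * (dotR k (yy j) - r) = 0.
  move=> j; exact: (@psumr_eq0P R _ predT (fun j => lam j * (dotR k (yy j) - r)) (fun j _ => mulr_ge0 (hl j) (D0 j)) sum0 j isT).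
have -> : r' = \sum_(j < n) lam j * r' by rewrite -mulr_suml hs mul1r.
apply: ler_sum => j _.
case: (eqVneq (lam j) 0) => [->|lj]; first by rewrite !mul0r.
have Dj : dotR k (yy j) = r.
  by apply/eqP; rewrite -subr_eq0; move/eqP: (DZ j); rewrite mulf_eq0 (negbTE lj).
case: (hy j) => nu [hnu hle].
have yn : forall i, yy j i = (nu i)%:R.
  have h1 : dotR k (yy j) - dotR k (fun i => (nu i)%:R) = 0.
    apply/eqP; rewrite eq_le; apply/andP; split.
      by rewrite subr_le0 Dj; exact: LBnu k0 kr hnu.
    by rewrite subr_ge0; exact: dot_mono k0 hle.
  rewrite /dotR -sumrB in h1.
  have nn : forall i', true -> 0 <= k i' * yy j i' - k i' * (nu i')%:R.
    by move=> i' _; rewrite -mulrBr mulr_ge0 // subr_ge0.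
  move=> i; have := @psumr_eq0P R _ predT _ nn h1 i isT.
  rewrite -mulrBr => /eqP; rewrite mulf_eq0 subr_eq0 gt_eqF //=.
  by move/eqP.
have h2 : \sum_(i < d) (k i - r / dl i) * (nu i)%:R = 0.
  under eq_bigr do rewrite mulrBl.
  rewrite sumrB nu_sum //; apply/eqP; rewrite subr_eq0 -Dj; apply/eqP.
  by apply: eq_bigr => i _; rewrite yn.
have -> : dotR k' (yy j) = r'.
  rewrite -(nu_sum r' hnu) /dotR; apply: eq_bigr => i _.
  rewrite yn; case: (eqVneq (nu i) 0%N) => [->|ni]; first by rewrite !mulr0.
  have nn : forall i', true -> 0 <= (k i' - r / dl i') * (nu i')%:R.
    move=> i' _; apply: mulr_ge0 => //; rewrite subr_ge0 ler_pdivrMr ?dl_gt0 //.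
  have := @psumr_eq0P R _ predT _ nn h2 i isT.
  move=> /eqP; rewrite mulf_eq0 pnatr_eq0 (negbTE ni) orbF subr_eq0.
  move=> /eqP kk; congr (_ * _).
  have kdl : k i * dl i = r by rewrite kk mulrVK // unitfE gt_eqF ?dl_gt0.
  have := hkk i kdl => <-; rewrite mulrK // unitfE gt_eqF ?dl_gt0 //.
done.
Qed.

Lemma natE (a b : nat) : (a%:R = b%:R :> R) <-> a = b.
Proof. split => [/eqP|->] //; by rewrite eqr_nat => /eqP. Qed.

Lemma rep (k : 'I_d -> nat) (j : nat) : (forall i, (1 <= k i)%N) ->
  (forall i, (j <= k i * delta i)%N) -> (exists i, k i * delta i = j)%N ->
  exists k' : 'I_d -> nat, (forall i, (k' i <= 2 * \prod_(i0 < d) delta i0)%N) /\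
     face_of f (nat_vec R k') = face_of f (nat_vec R k).
Proof.
move=> k1 kj [i0 e0].
have dv : forall i, (delta i %| \prod_(i0 < d) delta i0)%N.
  by move=> i; rewrite (bigD1 i) //= dvdn_mulr.
have P0 : (0 < \prod_(i0 < d) delta i0)%N by apply: prodn_gt0.
move: dv P0; set P := (\prod_(i0 < d) delta i0)%N => dv P0.
pose k' i := (if k i * delta i == j then P %/ delta i else (2 * P) %/ delta i)%N.
have k'd : forall i, (k' i * delta i = if k i * delta i == j then P else 2 * P)%N.
  by move=> i; rewrite /k'; case: ifP => _; rewrite divnK // dvdn_mull.
have PP : (P <= 2 * P)%N by rewrite leq_pmull.
exists k'; split.
  by move=> i; rewrite /k'; case: ifP => _; apply: leq_trans (leq_div _ _) _.
have k'1 : forall i, (1 <= k' i)%N.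
  move=> i; rewrite /k'; case: ifP => _; rewrite divn_gt0 //.
    exact: dvdn_leq.
  exact: leq_trans (dvdn_leq P0 (dv i)) PP.
have hk : forall (kk : 'I_d -> nat) i, 0 < nat_vec R kk i <-> (1 <= kk i)%N.
  by move=> kk i; rewrite /nat_vec ltr0n.
have cv : forall (kk : 'I_d -> nat) (c : nat) i,
   (nat_vec R kk i * dl i = c%:R) <-> (kk i * delta i = c)%N.
  by move=> kk c i; rewrite /nat_vec /dl -natrM; apply: natE.
have lv : forall (kk : 'I_d -> nat) (c : nat) i,
   (c%:R <= nat_vec R kk i * dl i) = (c <= kk i * delta i)%N.
  by move=> kk c i; rewrite /nat_vec /dl -natrM ler_nat.
have e0' : (k' i0 * delta i0 = P)%N by rewrite k'd e0 eqxx.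
apply: functional_extensionality => x; apply: propositional_extensionality; split.
  apply: (@face_sub _ _ P%:R j%:R i0 i0).
  - by move=> i; apply/hk.
  - by move=> i; apply/hk.
  - by move=> i; rewrite lv k'd; case: ifP.
  - exact/cv.
  - by move=> i; rewrite lv.
  - exact/cv.
  move=> i /cv; rewrite k'd; case: ifP => [/eqP h _|_ h]; first exact/cv.
  by exfalso; move: h; rewrite -{2}[P]mul1n => /eqP; rewrite eqn_pmul2r // .
apply: (@face_sub _ _ j%:R P%:R i0 i0).
- by move=> i; apply/hk.
- by move=> i; apply/hk.
- by move=> i; rewrite lv.
- exact/cv.
- by move=> i; rewrite lv k'd; case: ifP.
- exact/cv.
move=> i /cv h; apply/cv; rewrite k'd h eqxx //.
Qed.

End Geo.


Lemma digits_small B n (a : nat -> nat) : (forall i, (i < n)%N -> (a i < B)%N) ->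
  (\sum_(i < n) a i * B ^ i < B ^ n)%N.
Proof.
elim: n => [|n IH] h; first by rewrite big_ord0 expn0.
rewrite big_ord_recr /= expnS.
have h1 := IH (fun i hi => h i (ltnW hi)).
have h2 : (a n < B)%N := h n (ltnSn n).
have h3 : ((a n).+1 * B ^ n <= B * B ^ n)%N by rewrite leq_mul2r h2 orbT.
apply: leq_trans h3; rewrite mulSn ltn_add2r //.
Qed.

Lemma digits B n (a b : nat -> nat) : (forall i, (i < n)%N -> (a i < B)%N) ->
  (forall i, (i < n)%N -> (b i < B)%N) ->
  (\sum_(i < n) a i * B ^ i = \sum_(i < n) b i * B ^ i)%N ->
  forall i, (i < n)%N -> a i = b i.
Proof.
elim: n => [|n IH] ha hb //.
have ha' : forall i, (i < n)%N -> (a i < B)%N by move=> i hi; apply: ha; exact: ltnW.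
have hb' : forall i, (i < n)%N -> (b i < B)%N by move=> i hi; apply: hb; exact: ltnW.
rewrite !big_ord_recr /= => e.
have B0 : (0 < B ^ n)%N by rewrite expn_gt0; apply/orP; left; exact: leq_ltn_trans (leq0n (a n)) (ha n (ltnSn n)).
have sa := digits_small ha'; have sb := digits_small hb'.
have en : a n = b n.
  have := congr1 (fun m => m %/ B ^ n)%N e => /=.
  by rewrite ![(_ + _ * _)%N]addnC !divnMDl // !divn_small // !addn0.
move: e; rewrite en => /addIn e i; rewrite ltnS leq_eqVlt => /orP [/eqP ->//|hi].
exact: IH.
Qed.

Lemma poly_zero (R : realType) (p : {poly R}) : (forall t, p.[t] = 0) -> p = 0.
Proof.
move=> h; apply/eqP; apply: contraT => np.
pose rs : seq R := [seq i%:R | i <- seq.iota 0 (size p)].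
have hr : all (root p) rs by apply/allP => x /mapP [i _ ->]; apply/rootP; exact: h.
have hu : uniq rs.
  by rewrite map_inj_uniq ?iota_uniq // => a b /eqP; rewrite eqr_nat => /eqP.
by have := max_poly_roots np hr hu; rewrite size_map size_iota ltnn.
Qed.

Section Supp.
Variables (R : realType) (d : nat) (f : {mpoly R[d]}) (w : 'I_d -> nat) (ww : nat).
Hypothesis H : forall (lam : R) (x : 'I_d -> R),
  f.@[fun i => lam ^+ (w i) * x i] = lam ^+ ww * f.@[x].

Let S := msupp f.
Let B := (\sum_(nu <- S) \sum_(i < d) nu i).+1%N.
Let code (nu : 'X_{1..d}) := (\sum_(i < d) nu i * B ^ i)%N.
Let C := (\sum_(nu <- S) code nu).+1%N.
Let E (nu : 'X_{1..d}) := (C * (\sum_(i < d) w i * nu i) + code nu)%N.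

Lemma nuB nu i : nu \in S -> (nu i < B)%N.
Proof.
move=> h; rewrite /B ltnS; apply: leq_trans (_ : \sum_(i < d) nu i <= _)%N.
  by rewrite (bigD1 i) //= leq_addr.
by rewrite (bigD1_seq nu) ?msupp_uniq //= leq_addr.
Qed.

Lemma codeC nu : nu \in S -> (code nu < C)%N.
Proof. by move=> h; rewrite /C ltnS (bigD1_seq nu) ?msupp_uniq //= leq_addr. Qed.

Lemma code_inj nu mu : nu \in S -> mu \in S -> code nu = code mu -> nu = mu.
Proof.
move=> hn hm e.
pose a (n : nat) := if insub n is Some j then nu j else 0%N.
pose b (n : nat) := if insub n is Some j then mu j else 0%N.
have ea : forall j : 'I_d, a j = nu j by move=> j; rewrite /a valK.
have eb : forall j : 'I_d, b j = mu j by move=> j; rewrite /b valK.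
have h := @digits B d a b.
apply/mnmP => j; rewrite -ea -eb; apply: h => //.
- by move=> i hi; rewrite /a insubT; apply: nuB.
- by move=> i hi; rewrite /b insubT; apply: nuB.
- rewrite (eq_bigr (fun i : 'I_d => nu i * B ^ i)%N); last by move=> i _; rewrite ea.
  rewrite [RHS](eq_bigr (fun i : 'I_d => mu i * B ^ i)%N) //; by move=> i _; rewrite eb.
Qed.

Lemma prod_pow (t : R) (g : 'I_d -> nat) (nu : 'X_{1..d}) :
  \prod_(i < d) (t ^+ g i) ^+ nu i = t ^+ (\sum_(i < d) g i * nu i)%N.
Proof. by rewrite -prodrXr; apply: eq_bigr => i _; rewrite exprM. Qed.

Lemma wh_support nu : f@_nu != 0 -> (\sum_(i < d) w i * nu i)%N = ww.
Proof.
move=> hnu; apply/eqP; apply: contraT => hne.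
pose p : {poly R} := \sum_(mu <- S) f@_mu *: ('X^(E mu) - 'X^(C * ww + code mu)%N).
have p0 : p = 0.
  apply: poly_zero => t.
  have := H (t ^+ C) (fun i => t ^+ (B ^ i)).
  rewrite !mevalE /p horner_sum mulr_sumr => e.
  rewrite -[RHS](subrr (\sum_(m <- msupp f) f@_m * \prod_i ((t ^+ C) ^+ w i * t ^+ (B ^ i)) ^+ m i)).
  rewrite [X in _ = _ - X]e -sumrB; apply: eq_bigr => mu _.
  rewrite hornerZ hornerD hornerN !hornerXn mulrBr; congr (_ - _).
    congr (_ * _); rewrite (eq_bigr (fun i => (t ^+ (C * w i + B ^ i)) ^+ mu i)); last first.
      by move=> i _; rewrite exprD exprM.
    rewrite prod_pow /E; congr (_ ^+ _).
    rewrite big_distrr /= /code -big_split /=; apply: eq_bigr => i _.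
    rewrite mulnDl mulnA; congr (_ + _); exact: mulnC.
  rewrite prod_pow mulrCA -exprM -exprD; congr (_ * (_ ^+ _)).
  by rewrite /code; congr (_ + _); apply: eq_bigr => i _; rewrite mulnC.
have := congr1 (fun q : {poly R} => q`_(E nu)) p0.
rewrite coef0 /p coef_sum.
have hnS : nu \in S by rewrite mcoeff_msupp.
rewrite (bigD1_seq nu) ?msupp_uniq //= coefZ coefB !coefXn eqxx.
have nE : (E nu == C * ww + code nu)%N = false.
  apply/negP => /eqP h; move/negP: hne; apply; apply/eqP.
  have C0 : (0 < C)%N by [].
  have := congr1 (fun m => m %/ C)%N h => /=.
  by rewrite /E ![(C * _)%N]mulnC !divnMDl // !divn_small ?codeC // !addn0.
rewrite nE subr0 mulr1 big1_seq ?addr0; first by move/eqP; rewrite (negbTE hnu).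
move=> mu /andP [mune muS]; rewrite coefZ coefB !coefXn.
have -> : (E nu == E mu) = false.
  apply/negP => /eqP h; move/negP: mune; apply; apply/eqP; apply: code_inj => //.
  have := congr1 (fun m => m %% C)%N h => /=.
  by rewrite /E ![(C * _)%N]mulnC !modnMDl !modn_small ?codeC.
have -> : (E nu == C * ww + code mu)%N = false.
  apply/negP => /eqP h.
  have hc : code nu = code mu.
    have := congr1 (fun m => m %% C)%N h => /=.
    by rewrite /E ![(C * _)%N]mulnC !modnMDl !modn_small ?codeC.
  move: h; rewrite /E hc => /addIn /eqP; rewrite eqn_pmul2l // => /eqP hh.
  by move/negP: hne; apply; rewrite hh.
by rewrite subrr mulr0.
Qed.

End Supp.

Unset Implicit Arguments.
Set Strict Implicit.


Theorem lemma4p4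
  (A : comUnitRingType) (F : int -> A -> Prop) (hF : complete_filtration F)
  (L : A) (hL : L \is a GRing.unit) (hLF : F 1%R L^-1)
  (R : realType) (d : nat) (hd : (0 < d)%N) (f : {mpoly R[d]})
  (hconv : convenient f) (hnd : non_degenerate f) (hwh : weighted_homogeneous f)
  (delta : 'I_d -> nat) (hdelta : forall i, (1 <= delta i)%N /\ f@_(mnm1 i *+ delta i)%MM != 0) :
  ps_sub (B_f F L f) (ps_mul (ps_T A) (ps_inv_1mT A))
  = (fun m : nat => if m == 0%N then 0 else - (L^-1 ^+ (\sum_(i < d) (m %/ delta i)%N))).
Proof.
case: hwh => w [ww [hw [hww Hh]]].
have hsupp := wh_support Hh.
have hdpos : forall i, (0 < delta i)%N by move=> i; case: (hdelta i).
have hdel : forall i, f@_(mnm1 i *+ delta i)%MM != 0 by move=> i; case: (hdelta i).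
have wd : forall i, (w i * delta i)%N = ww.
  move=> i; rewrite -(hsupp _ (hdel i)) (bigD1 i) //= big1 ?addn0.
    by rewrite mulmnE mnm1E eqxx mul1n.
  by move=> j /negbTE ji; rewrite mulmnE mnm1E eq_sym ji mul0n muln0.
have hSI : forall nu : 'X_{1..d}, f@_nu != 0 ->
    \sum_(i < d) (nu i)%:R / (delta i)%:R = 1 :> R.
  move=> nu hnu.
  have ww0 : (ww%:R : R) != 0 by rewrite pnatr_eq0 -lt0n.
  transitivity (\sum_(i < d) (w i * nu i)%N%:R / (ww%:R : R)).
    apply: eq_bigr => i _; rewrite -(wd i) !natrM.
    have d0 : ((delta i)%:R : R) != 0 by rewrite pnatr_eq0 -lt0n.
    have w0 : ((w i)%:R : R) != 0 by rewrite pnatr_eq0 -lt0n.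
    by rewrite -mulf_div divff // mul1r.
  by rewrite -mulr_suml -natr_sum hsupp // divff.
pose i0 : 'I_d := Ordinal hd.
pose l := L^-1.
pose g (k : 'I_d -> nat) := face_of f (nat_vec R k).
have key : forall j, sum_S F L f j = hsum F (Pj delta j) (aK l).
  move=> j.
  pose Mj (k : 'I_d -> nat) := is_mk f (nat_vec R k) j%:R.
  have e1 : (fun tau => S_sigma F L f tau j) =
            (fun tau => hsum F (fun k => g k = tau /\ Mj k) (aK l)).
    apply: functional_extensionality => tau; rewrite /S_sigma; congr hsum.
    apply: functional_extensionality => k; apply: propositional_extensionality.
    rewrite /sigma_cone /g /Mj; split; first by case=> [[_ h1] h2].
    by case=> h1 h2; split => //; split => // i; rewrite /nat_vec.
  rewrite /sum_S e1.
  pose P := (2 * \prod_(i < d) delta i)%N.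
  pose Ts : seq (cT (('I_d -> R) -> Prop)) :=
    @undup (cT (('I_d -> R) -> Prop)) (filter (pb (compact_face f)) (map (fun k : Kt d => g k) (boxlist d P))).
  rewrite (@outer_sum _ _ hF l d hLF _ g (compact_face f) Mj Ts).
  - congr hsum; apply: functional_extensionality => k; apply: propositional_extensionality.
    rewrite /Mj (compact_iff hdpos hdel k i0) (is_mk_iff hdpos hdel hSI k j i0) /Pj.
    by split; case=> a b; split.
  - exact: undup_uniq.
  - move=> t; rewrite /Ts (@mem_undup (cT (('I_d -> R) -> Prop))) mem_filter => /andP [/pbP h _]; exact: h.
  move=> k Cg Mk.
  have k1 := (proj1 (compact_iff hdpos hdel k i0) Cg).
  have [kj kex] := (proj1 (is_mk_iff hdpos hdel hSI k j i0) Mk).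
  case: (rep hdpos hdel hSI k1 kj kex) => k' [k'b k'e].
  rewrite /Ts (@mem_undup (cT (('I_d -> R) -> Prop))) mem_filter; apply/andP; split; first by apply/pbP.
  apply/mapP; exists (k' : Kt d); last by rewrite /g k'e.
  by rewrite mem_box; apply/forallP => i; apply: k'b.
apply: functional_extensionality => m.
rewrite /ps_sub /B_f /ps_scale /ps_mul /ps_T /ps_inv_1mT.
have -> : \sum_(i < m.+1) 1 * sum_S F L f (m - i)%N = \sum_(j < m.+1) hsum F (Pj delta j) (aK l).
  rewrite (reindex_inj rev_ord_inj) /=; apply: eq_bigr => i _.
  by rewrite mul1r key subSS subKn // -ltnS.
have hLl : L * l = 1 by rewrite /l mulrV.
have -> : (L - 1) ^+ d = L ^+ d * (1 - l) ^+ d.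
  by rewrite -exprMn mulrBr mulr1 hLl.
rewrite -mulrA (final_alg hF hLF hdpos m) mulrBr -exprMn hLl expr1n exprD mulrA -exprMn hLl expr1n mul1r.
have -> : \sum_(i < m.+1) (if i == 1%N :> nat then 1 else 0) * (1 : A) = if m == 0%N then 0 else 1.
  case: m => [|m]; first by rewrite big_ord1 /= mulr1.
  by rewrite 2!big_ord_recl /= !mulr1 big1_eq add0r addr0.
case: (eqVneq m 0%N) => [->|mne].
  by rewrite (eq_bigr (fun _ => 0%N)) ?big1 ?expr0 ?subrr // => i _; rewrite div0n.
by rewrite addrAC subrr add0r.
Qed.
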